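(* Let $(X,d,f)$ be a dynamical system and $\mathcal{A}=\{\mathcal{U}_n\}_{n\in\mathbb{N}}$ a tame defining sequence of $(X,d)$. Then $f$ has the finite shadowing property if and only if for every $m\in\mathbb{N}$ there is $n>m$ such that $\mathcal{PO}(\mathcal{U}_n)\hookrightarrow\mathcal{O}(\mathcal{U}_m)$, i.e. for every $(O_i)\in\mathcal{PO}(\mathcal{U}_n)$ the unique $(V_i)\in\mathcal{U}_m^{\mathbb{N}}$ with $O_i\subseteq V_i$ for all $i$ belongs to $\mathcal{O}(\mathcal{U}_m)$.
   Context: Spaces are nonempty separable metrizable; $d$ is admissible and $f$ continuous. A partition is a cover by pairwise disjoint nonempty clopen sets. A defining sequence is a sequence $\{\mathcal{U}_n\}$ of partitions, each refining the previous, whose union is a basis; tame if $\sup\{\operatorname{diam}O:O\in\mathcal{U}_n\}\to0$ and for each $n$ there is $\rho_n>0$ such that points in distinct elements of $\mathcal{U}_n$ have distance $\ge\rho_n$. $\mathcal{O}(\mathcal{U})=\{(O_i)\in\mathcal{U}^{\mathbb{N}}:\forall k\ \exists x,\ f^i(x)\in O_i\ (0\le i\le k)\}$; $\mathcal{PO}(\mathcal{U})=\{(O_i)\in\mathcal{U}^{\mathbb{N}}: f(O_i)\cap O_{i+1}\ne\emptyset\ \forall i\}$. Finite shadowing property: for every $\varepsilon>0$ there is $\delta>0$ such that every finite sequence $(x_i)_{i=0}^k$ with $d(f(x_i),x_{i+1})<\delta$ admits $z$ with $d(f^i(z),x_i)<\varepsilon$ for $0\le i\le k$. *)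

(* Defs.v *)
From Stdlib Require Import Reals.
Open Scope R_scope.

Definition subset_ {X : Type} (A B : X -> Prop) : Prop := forall x, A x -> B x.

Definition is_metric {X : Type} (d : X -> X -> R) : Prop :=
  (forall x y, 0 <= d x y) /\
  (forall x y, d x y = 0 <-> x = y) /\
  (forall x y, d x y = d y x) /\
  (forall x y z, d x z <= d x y + d y z).

(* open sets of the topology induced by d (d is admissible: the topology of X
   is, by definition, the one induced by d) *)
Definition d_open {X : Type} (d : X -> X -> R) (U : X -> Prop) : Prop :=
  forall x, U x -> exists e, 0 < e /\ forall y, d x y < e -> U y.

Definition d_clopen {X : Type} (d : X -> X -> R) (U : X -> Prop) : Prop :=
  d_open d U /\ d_open d (fun x => ~ U x).

Definition d_separable {X : Type} (d : X -> X -> R) : Prop :=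
  exists s : nat -> X, forall x e, 0 < e -> exists n, d x (s n) < e.

Definition d_continuous {X : Type} (d : X -> X -> R) (f : X -> X) : Prop :=
  forall x e, 0 < e -> exists dl, 0 < dl /\ forall y, d x y < dl -> d (f x) (f y) < e.

(* A partition: cover by pairwise disjoint nonempty clopen sets.
   A family of subsets is a predicate P on subsets. *)
Definition is_partition {X : Type} (d : X -> X -> R) (P : (X -> Prop) -> Prop) : Prop :=
  (forall O, P O -> (exists x, O x) /\ d_clopen d O) /\
  (forall O1 O2, P O1 -> P O2 -> O1 <> O2 -> forall x, O1 x -> O2 x -> False) /\
  (forall x, exists O, P O /\ O x).

Definition refines {X : Type} (V U : (X -> Prop) -> Prop) : Prop :=
  forall O, V O -> exists O', U O' /\ subset_ O O'.

Definition defining_sequence {X : Type} (d : X -> X -> R)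
    (U : nat -> (X -> Prop) -> Prop) : Prop :=
  (forall n, is_partition d (U n)) /\
  (forall n, refines (U (S n)) (U n)) /\
  (forall W x, d_open d W -> W x ->
     exists n O, U n O /\ O x /\ subset_ O W).

Definition tame {X : Type} (d : X -> X -> R) (U : nat -> (X -> Prop) -> Prop) : Prop :=
  defining_sequence d U /\
  (forall eps, 0 < eps -> exists N, forall n, (N <= n)%nat ->
     forall O, U n O -> forall x y, O x -> O y -> d x y <= eps) /\
  (forall n, exists rho, 0 < rho /\
     forall O1 O2, U n O1 -> U n O2 -> O1 <> O2 ->
       forall x y, O1 x -> O2 y -> rho <= d x y).

Definition orbit_seqs {X : Type} (f : X -> X) (P : (X -> Prop) -> Prop)
    (O : nat -> (X -> Prop)) : Prop :=
  (forall i, P (O i)) /\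
  (forall k, exists x, forall i, (i <= k)%nat -> O i (Nat.iter i f x)).

Definition pseudo_orbit_seqs {X : Type} (f : X -> X) (P : (X -> Prop) -> Prop)
    (O : nat -> (X -> Prop)) : Prop :=
  (forall i, P (O i)) /\
  (forall i, exists x, O i x /\ O (S i) (f x)).

Definition PO_embeds_O {X : Type} (f : X -> X) (Un Um : (X -> Prop) -> Prop) : Prop :=
  forall O : nat -> (X -> Prop), pseudo_orbit_seqs f Un O ->
  forall V : nat -> (X -> Prop),
    (forall i, Um (V i) /\ subset_ (O i) (V i)) ->
    orbit_seqs f Um V.

Definition finite_shadowing {X : Type} (d : X -> X -> R) (f : X -> X) : Prop :=
  forall eps, 0 < eps -> exists dl, 0 < dl /\
    forall (k : nat) (x : nat -> X),
      (forall i, (i < k)%nat -> d (f (x i)) (x (S i)) < dl) ->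
      exists z, forall i, (i <= k)%nat -> d (Nat.iter i f z) (x i) < eps.

(* Main.v *)
Require Import Defs.
From Stdlib Require Import Reals Lra Lia Classical ClassicalEpsilon.
Open Scope R_scope.

Lemma choice_fun {A B : Type} (P : A -> B -> Prop) :
  (forall a, exists b, P a b) -> exists g : A -> B, forall a, P a (g a).
Proof.
  intro H. exists (fun a => proj1_sig (constructive_indefinite_description _ (H a))).
  intro a. exact (proj2_sig (constructive_indefinite_description _ (H a))).
Qed.

Lemma refines_trans {X : Type} (U : nat -> (X -> Prop) -> Prop) :
  (forall n, refines (U (S n)) (U n)) ->
  forall m k, refines (U (k + m)%nat) (U m).
Proof.
  intros Href m k. induction k as [|k IH]; simpl.
  - intros O HO. exists O. split; [exact HO| intros x Hx; exact Hx].
  - intros O HO. destruct (Href (k + m)%nat O HO) as [O1 [H1 S1]].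
    destruct (IH O1 H1) as [O2 [H2 S2]]. exists O2. split; [exact H2|].
    intros x Hx. apply S2, S1, Hx.
Qed.

Theorem proposition4p14 (X : Type) (d : X -> X -> R) (f : X -> X)
  (U : nat -> (X -> Prop) -> Prop) :
  inhabited X -> is_metric d -> d_separable d -> d_continuous d f ->
  tame d U ->
  (finite_shadowing d f <->
   forall m : nat, exists n : nat, (m < n)%nat /\ PO_embeds_O f (U n) (U m)).
Proof.
  intros _ Hmet _ _ [[Hpart [Href Hbasis]] [Hdiam Hsep]].
  destruct Hmet as [Hd0 [Hdeq [Hdsym Hdtri]]].
  split.
  - intros FS m.
    destruct (Hsep m) as [rho [Hrho Hsepm]].
    destruct (FS rho Hrho) as [dl [Hdl Hsh]].
    destruct (Hdiam (dl/2)) as [N HN]; [lra|].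
    exists (S (m + N)). split; [lia|].
    intros O [HPO HPOstep] V HV. split; [intro i; apply HV|]. intro k.
    destruct (choice_fun _ HPOstep) as [y Hy].
    destruct (Hsh k y) as [z Hz].
    { intros i Hi. destruct (Hy i) as [_ H2]. destruct (Hy (S i)) as [H3 _].
      assert (d (f (y i)) (y (S i)) <= dl/2).
      { apply (HN (S (m+N)) ltac:(lia) (O (S i)) (HPO (S i))); assumption. }
      lra. }
    exists z. intros i Hi.
    destruct (Hpart m) as [_ [_ Hcov]].
    destruct (Hcov (Nat.iter i f z)) as [W [HW HWz]].
    destruct (classic (W = V i)) as [E|E]; [subst; exact HWz|].
    exfalso.
    assert (rho <= d (Nat.iter i f z) (y i)).
    { apply (Hsepm W (V i) HW (proj1 (HV i)) E); [exact HWz|].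
      apply (proj2 (HV i)). apply (Hy i). }
    specialize (Hz i Hi). lra.
  - intros H eps Heps.
    destruct (Hdiam (eps/2)) as [N HN]; [lra|].
    destruct (H N) as [n [Hmn Hemb]].
    destruct (Hsep n) as [rho [Hrho Hsepn]].
    exists rho. split; [exact Hrho|].
    intros k x Hx.
    set (x' := fun i => if Nat.leb i k then x i else Nat.iter (i - k) f (x k)).
    assert (Hx'd : forall i, d (f (x' i)) (x' (S i)) < rho).
    { intro i. unfold x'.
      destruct (Nat.leb_spec i k) as [H1|H1].
      - destruct (Nat.leb_spec (S i) k) as [H2|H2].
        + apply Hx; lia.
        + assert (i = k) by lia. subst i.
          replace (S k - k)%nat with 1%nat by lia. simpl.
          rewrite (proj2 (Hdeq _ _) eq_refl). exact Hrho.
      - destruct (Nat.leb_spec (S i) k) as [H2|H2]; [lia|].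
        replace (S i - k)%nat with (S (i - k)) by lia. simpl.
        rewrite (proj2 (Hdeq _ _) eq_refl). exact Hrho. }
    destruct (Hpart n) as [_ [_ Hcovn]].
    destruct (choice_fun _ Hcovn) as [c Hc].
    set (O := fun i => c (x' i)).
    assert (HPO : pseudo_orbit_seqs f (U n) O).
    { split; [intro i; apply Hc|].
      intro i. exists (x' i). split; [apply Hc|].
      unfold O. destruct (Hcovn (f (x' i))) as [W [HW HWz]].
      destruct (classic (W = c (x' (S i)))) as [E|E]; [subst; exact HWz|].
      exfalso.
      assert (rho <= d (f (x' i)) (x' (S i))).
      { apply (Hsepn W _ HW (proj1 (Hc _)) E); [exact HWz| apply Hc]. }
      specialize (Hx'd i). lra. }
    assert (Href' : refines (U n) (U N)).
    { replace n with ((n - N) + N)%nat by lia. apply refines_trans, Href. }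
    assert (HVex : forall i, exists V, U N V /\ subset_ (O i) V).
    { intro i. apply Href'. apply HPO. }
    destruct (choice_fun _ HVex) as [V HV].
    destruct (Hemb O HPO V HV) as [_ Horb].
    destruct (Horb k) as [z Hz].
    exists z. intros i Hi.
    assert (E : x' i = x i) by (unfold x'; rewrite (proj2 (Nat.leb_le i k) Hi); reflexivity).
    assert (Hxi : V i (x i)).
    { apply (proj2 (HV i)). unfold O. rewrite <- E. apply Hc. }
    assert (d (Nat.iter i f z) (x i) <= eps/2).
    { apply (HN N (le_n N) (V i) (proj1 (HV i))); [apply Hz; exact Hi| exact Hxi]. }
    lra.
Qed.
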